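(* Let $n\ge3$ and let $b_1,\dots,b_n$ be positive integers. For $k=0,\dots,b_1+\dots+b_n-\max\{b_1,\dots,b_n\}$, $$A([\mathbf b],k)=\sum_{(i_2,\dots,i_{n-1})\in\Delta}A_{i_2}A_{i_2,i_3}A_{i_3,i_4}\cdots A_{i_{n-1},i_n},$$ where $i_n:=k$, $A_{i_2}=\binom{b_1}{i_2}\binom{b_2}{i_2}$, and for $s=2,\dots,n-1$, $$A_{i_s,i_{s+1}}=\binom{b_1+\dots+b_s-i_s}{i_{s+1}-i_s}\binom{b_{s+1}+i_s}{i_{s+1}}\ge0,$$ and $\Delta$ is the set of integer tuples $(i_2,\dots,i_{n-1})$ with $0\le i_s\le\min\{b_1+\dots+b_s-\max\{b_1,\dots,b_s\},\ i_{s+1}\}$ for $s=2,\dots,n-1$. In particular each $A([\mathbf b],k)$ is a sum of products of nonnegative integers.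
   Context: $A([\mathbf b],k)$ (Simon Newcomb number) is the number of words $u_1\cdots u_N$, $N=b_1+\dots+b_n$, over $\{1,\dots,n\}$ containing the letter $i$ exactly $b_i$ times, having exactly $k$ descents, where a descent is an index $m$ with $u_m>u_{m+1}$. Binomial coefficients $\binom{a}{m}$ are taken to be $0$ when $m<0$ or $m>a$. *)

(* Defs.v *)
From mathcomp Require Import all_boot.
Set Implicit Arguments. Unset Strict Implicit. Unset Printing Implicit Defensive.

(* The multiplicity vector b = [:: b_1; ...; b_n] is a seq nat; b_i = nth 0 b (i-1).
   Letters 1..n are encoded as ordinals 0..n-1 of 'I_n (order-preserving). *)

Definition descents (n : nat) (w : seq 'I_n) : nat :=
  count (fun p : 'I_n * 'I_n => (p.2 < p.1)%N) (zip w (behead w)).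

Definition newcomb (b : seq nat) (k : nat) : nat :=
  #|[set w : (sumn b).-tuple 'I_(size b) |
      [forall j : 'I_(size b), count_mem j w == nth 0 b j]
      && (descents w == k)]|.

Definition psum (b : seq nat) (s : nat) : nat := sumn (take s b).
Definition pmax (b : seq nat) (s : nat) : nat := foldr maxn 0 (take s b).

(* the index function s |-> i_s, for s = 2..n-1 read from the tuple t, and i_n := k *)
Definition idx (n k : nat) (t : seq nat) (s : nat) : nat :=
  if s == n then k else nth 0 t (s - 2).

Definition A2 (b : seq nat) (i2 : nat) : nat :=
  'C(nth 0 b 0, i2) * 'C(nth 0 b 1, i2).

Definition Ast (b : seq nat) (i_s i_s1 s : nat) : nat :=
  'C(psum b s - i_s, i_s1 - i_s) * 'C(nth 0 b s + i_s, i_s1).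

Definition inDelta (b : seq nat) (n k : nat) (t : seq nat) : bool :=
  all (fun s => idx n k t s <= minn (psum b s - pmax b s) (idx n k t s.+1))
      (index_iota 2 n).

(* Main.v *)
Require Import Defs.
From mathcomp Require Import all_boot zify.
Set Implicit Arguments. Unset Strict Implicit. Unset Printing Implicit Defensive.

Fixpoint des (w : seq nat) : nat :=
  match w with
  | x :: ((y :: _) as t) => (y < x) + des t
  | _ => 0
  end.

Definition dpre (o : option nat) (w : seq nat) : nat :=
  if o is Some x then des (x :: w) else des w.

Fixpoint ins (L : nat) (u : seq nat) (c : nat) : seq (seq nat) :=
  match u with
  | [::] => [:: nseq c L]
  | x :: u' => (fix g c := [seq x :: w | w <- ins L u' c] ++
                  (if c is c'.+1 then [seq L :: w | w <- g c'] else [::])) c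
  end.

Lemma ins0 L x u : ins L (x :: u) 0 = [seq x :: w | w <- ins L u 0].
Proof. by rewrite /= cats0. Qed.

Lemma insS L x u c : ins L (x :: u) c.+1 =
  [seq x :: w | w <- ins L u c.+1] ++ [seq L :: w | w <- ins L (x :: u) c].
Proof. by []. Qed.

Lemma nseq_eq (L c : nat) (w : seq nat) :
  (nseq c L == w) = (filter (fun z => z != L) w == [::]) && (count_mem L w == c).
Proof.
elim: w c => [|y w IH] [|c] /=; try by [].
all: case: (eqVneq y L) => [->|yL] /=; try by [].
- by rewrite add1n andbF.
- by rewrite eqseq_cons eqxx /= IH add1n eqSS.
- by rewrite eqseq_cons eq_sym (negbTE yL).
Qed.
Lemma count_map_cons (x : nat) (s : seq (seq nat)) (w : seq nat) :
  count_mem w [seq x :: v | v <- s] =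
  if w is y :: w' then (y == x) * count_mem w' s else 0.
elim: s => [|v s IH] /=; first by case: w => //= *; rewrite muln0.
rewrite IH; case: w IH => [|y w'] _ //=.
by rewrite eqseq_cons (eq_sym x); case: (y == x); rewrite /= ?mul1n ?mul0n ?add0n // eq_sym.
Qed.

Lemma count_ins L u c (w : seq nat) : L \notin u ->
  count_mem w (ins L u c) =
  ((filter (fun z => z != L) w == u) && (count_mem L w == c)).
Proof.
elim: w u c => [|y w IHw] u c.
  case: u => [|x u] Lu.
    by rewrite /= addn0; case: c.
  by case: c => [|c]; rewrite ?ins0 ?insS ?count_cat !count_map_cons.
case: u => [|x u] Lu.
rewrite /= addn0 (nseq_eq L c (y :: w)). by [].
have xL : x != L by apply: contra Lu => /eqP ->; rewrite mem_head.
have Lu' : L \notin u by apply: contra Lu => H; rewrite in_cons H orbT.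
case: c => [|c].
  rewrite ins0 count_map_cons IHw //=.
  case: (eqVneq y L) => [->|yL] /=.
    by rewrite eq_sym (negbTE xL) add1n andbF.
  rewrite eqseq_cons add0n; case: (y == x) => //=.
  by rewrite mul1n.
rewrite insS count_cat !count_map_cons !IHw //=.
case: (eqVneq y L) => [->|yL] /=.
  by rewrite eq_sym (negbTE xL) add1n eqSS mul0n add0n mul1n.
rewrite eqseq_cons add0n mul0n addn0; case: (y == x) => //=.
by rewrite mul1n.
Qed.

Definition cf (i N c j : nat) : nat :=
  if i <= j then 'C(N - i, j - i) * 'C(c + i, j) else 0.

Lemma binge m j : m <= j -> 'C(m, j) = (j == m).
Proof.
rewrite leq_eqVlt => /orP [/eqP ->|H]; first by rewrite eqxx binn.
by rewrite bin_small //; have/negbTE-> : j != m by rewrite neq_ltn H orbT.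
Qed.

Lemma alg0 (d : bool) i N j : i <= N ->
  cf (d + i) N.+1 0 j = (if d <= j then cf i N 0 (j - d) else 0).
Proof.
move=> iN; rewrite /cf !add0n.
case: d => /=.
  case: j => [|j]; first by rewrite add1n.
  rewrite subn1 /=.
  have -> : (1 + i <= j.+1) = (i <= j) by rewrite add1n ltnS.
  case: ifP => // ij.
  have -> : N.+1 - (1 + i) = N - i by lia.
  have -> : j.+1 - (1 + i) = j - i by lia.
  rewrite add1n (@binge i.+1 j.+1) // (binge ij) eqSS.
  by case: eqP => [->|_]; rewrite ?subnn ?bin0 ?muln0.
rewrite subn0; case: ifP => // ij; rewrite (binge ij).
by case: eqP => [->|_]; rewrite ?subnn ?bin0 ?muln0.
Qed.

Lemma algS (d : bool) i N c j : i <= N ->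
  cf (d + i) N.+1 c.+1 j =
  (if d <= j then cf i N c.+1 (j - d) else 0) + cf (1 + i) N.+1 c j.
Proof.
move=> iN; rewrite /cf.
have E1 : N.+1 - (1 + i) = N - i by lia.
have E2 : c + (1 + i) = c.+1 + i by lia.
rewrite E2.
case: d => /=; rewrite ?E1.
- case: j => [|j]; first by rewrite !add1n.
  rewrite subn1 /=.
  case: (leqP i j) => ij.
    rewrite !ifT; try lia.
    have -> : j.+1 - (1 + i) = j - i by lia.
    have -> : c.+1 + (1 + i) = (c.+1 + i).+1 by lia.
    by rewrite binS mulnDr addnC.
  by rewrite !ifF //; lia.
- have Z : false + i = i by [].
  rewrite subn0 Z.
  case: (ltngtP i j) => ij.
  + have -> : N.+1 - i = (N - i).+1 by lia.
    have -> : j - i = (j - (1 + i)).+1 by lia.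
    by rewrite binS mulnDl.
  + by [].
  + subst j; rewrite subnn !bin0 addn0.
    by [].
Qed.

Definition dd (o : option nat) (x : nat) : bool := if o is Some y then x < y else false.

Lemma dpre_cons o x w : dpre o (x :: w) = dd o x + dpre (Some x) w.
Proof. by case: o. Qed.

Lemma dpre_L o L w : (forall y, o = Some y -> y <= L) ->
  dpre o (L :: w) = dpre (Some L) w.
Proof.
case: o => [y|] // /(_ y erefl) yL.
by rewrite dpre_cons /= ltnNge yL.
Qed.

Lemma des_nseq c L : des (nseq c L) = 0.
Proof. by elim: c => [|[|c] IH] //=; rewrite ltnn. Qed.

Lemma dpre_nseq o L c : (forall y, o = Some y -> y <= L) -> dpre o (nseq c L) = 0.
Proof.
case: o => [y|] /=; last by rewrite des_nseq.
move=> /(_ y erefl) yL; case: c => [|c] //=.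
by rewrite ltnNge yL; move: (des_nseq c.+1 L).
Qed.

Lemma des_le w : des w <= (size w).-1.
Proof.
elim: w => [|x [|y w] IH] //=.
by move: IH => /=; case: (y < x); lia.
Qed.

Lemma dpre_le o u : dpre o u <= size u.
Proof.
case: o => [y|] /=; first exact: (des_le (y :: u)).
by apply: leq_trans (des_le u) _; apply: leq_pred.
Qed.

Lemma count_shift (s : seq (seq nat)) (f : seq nat -> nat) (d j : nat) :
  count (fun w => d + f w == j) s = if d <= j then count (fun w => f w == j - d) s else 0.
Proof.
case: ifP => dj.
  by apply: eq_count => w; apply/eqP/eqP; lia.
have -> : count (fun w => d + f w == j) s = count pred0 s.
  by apply: eq_count => w /=; apply/eqP; lia.
by rewrite count_pred0.
Qed.

Lemma count_des_ins L u c o j : all (fun z => z < L) u ->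
  (forall y, o = Some y -> y <= L) ->
  count (fun w => dpre o w == j) (ins L u c) = cf (dpre o u) (size u) c j.
Proof.
elim: u c o j => [|x u IH] c o j Hu Ho.
  rewrite /= dpre_nseq // addn0 /cf.
  have -> : dpre o [::] = 0 by case: o Ho.
  by case: j => [|j]; rewrite ?bin0 ?muln1.
move: Hu => /= /andP [xL Hu].
have HSx : forall y, Some x = Some y -> y <= L by move=> y [<-]; apply: ltnW.
have iN := dpre_le (Some x) u.
rewrite dpre_cons.
elim: c o j Ho => [|c IHc] o j Ho.
  rewrite cats0 count_map.
  rewrite (eq_count (a2 := fun w => dd o x + dpre (Some x) w == j)); last first.
    by move=> w; rewrite /preim /= dpre_cons.
  by rewrite count_shift (IH 0 (Some x) (j - dd o x) Hu HSx) alg0.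
rewrite count_cat !count_map.
rewrite (eq_count (a2 := fun w => dd o x + dpre (Some x) w == j)); last first.
  by move=> w; rewrite /preim /= dpre_cons.
rewrite (eq_count (a1 := preim _ _) (a2 := fun w => dpre (Some L) w == j)); last first.
  by move=> w; rewrite /preim /= dpre_L.
have HSL : forall y, Some L = Some y -> y <= L by move=> y [<-].
rewrite count_shift (IH c.+1 (Some x) (j - dd o x) Hu HSx) (IHc (Some L) j HSL).
by rewrite /= xL algS.
Qed.

Lemma ins_prop (P : pred nat) L u c w : all P u -> P L -> w \in ins L u c ->
  all P w /\ size w = size u + c.
Proof.
elim: u c w => [|x u IH] c w Hu HL.
  by rewrite inE => /eqP ->; rewrite all_nseq HL orbT size_nseq.
move: Hu => /= /andP [Px Hu].
elim: c w => [|c IHc] w.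
  rewrite cats0 => /mapP [v /(IH _ _ Hu HL) [Av Sv] ->].
  by rewrite /= Px Av Sv.
rewrite mem_cat => /orP [] /mapP [v Hv ->].
  by have [Av Sv] := IH _ _ Hu HL Hv; rewrite /= Px Av Sv.
by have [Av Sv] := IHc _ Hv; rewrite /= HL Av Sv; split => //; lia.
Qed.

Fixpoint wordsr (r : seq nat) : seq (seq nat) :=
  match r with
  | [::] => [:: [::]]
  | c :: r' => flatten [seq ins (size r') u c | u <- wordsr r']
  end.

Definition words (b : seq nat) := wordsr (rev b).

Lemma words_rcons b c :
  words (rcons b c) = flatten [seq ins (size b) u c | u <- words b].
Proof. by rewrite /words rev_rcons /= size_rev. Qed.

Lemma words_prop b w : w \in words b ->
  all (fun x => x < size b) w /\ size w = sumn b.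
Proof.
elim/last_ind: b w => [|b c IH] w.
  by rewrite /words /= inE => /eqP ->.
rewrite words_rcons => /flatten_mapP [u /IH [Au Su] Hw].
have := @ins_prop (fun x => x < size (rcons b c)) (size b) u c w.
rewrite size_rcons sumn_rcons -Su; apply => //.
by apply: sub_all Au => x /= /ltnW; rewrite ltnS.
Qed.

Definition valid (b : seq nat) (w : seq nat) : bool :=
  all (fun x => x < size b) w &&
  all (fun j => count_mem j w == nth 0 b j) (iota 0 (size b)).

Lemma sumn_eqand (a : seq nat) (B : bool) (s : seq (seq nat)) :
  sumn [seq nat_of_bool ((a == u) && B) | u <- s] = count_mem a s * B.
Proof.
elim: s => [|u s IH] /=; first by [].
by rewrite IH mulnDl eq_sym; case: (u == a); case: B IH.
Qed.

Lemma valid_rcons b c w :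
  valid b (filter (fun z => z != size b) w) && (count_mem (size b) w == c) =
  valid (rcons b c) w.
Proof.
rewrite /valid size_rcons all_filter -addn1 iotaD all_cat /= add0n andbT.
rewrite nth_rcons ltnn eqxx.
have -> : all [pred x | (x != size b) ==> (x < size b)] w = all (fun x => x < size b + 1) w.
  apply: eq_all => x /=; case: (eqVneq x (size b)) => [->|ne] /=; rewrite addn1; first by rewrite ltnSn.
  by rewrite ltnS [RHS]leq_eqVlt (negbTE ne).
rewrite -andbA; congr (_ && _).
have -> : all (fun j => count_mem j [seq z <- w | z != size b] == nth 0 b j) (iota 0 (size b))
  = all (fun j => count_mem j w == nth 0 (rcons b c) j) (iota 0 (size b)).
  apply: eq_in_all => j; rewrite mem_iota add0n /= => jb.
  rewrite nth_rcons jb count_filter; congr (_ == _); apply: eq_count => z /=.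
  by case: (eqVneq z j) => [->|] //=; rewrite neq_ltn jb.
by rewrite andbC.
Qed.

Lemma count_words b w : count_mem w (words b) = valid b w.
Proof.
elim/last_ind: b w => [|b c IH] w.
  by rewrite /words /= /valid /= andbT addn0; case: w.
rewrite words_rcons count_flatten -map_comp.
rewrite (_ : map _ _ = [seq nat_of_bool ((filter (fun z => z != size b) w == u) && (count_mem (size b) w == c)) | u <- words b]); last first.
  apply/eq_in_map => u /words_prop [Au _] /=; rewrite count_ins //.
  by apply/negP => /(allP Au); rewrite ltnn.
by rewrite sumn_eqand IH -valid_rcons; case: (valid _ _); case: (_ == c).
Qed.

Definition D (b : seq nat) (k : nat) : nat := count (fun w => des w == k) (words b).

Lemma sum_ind (a n : nat) (X : nat -> nat) :
  \sum_(i < n) (a == i) * X i = if a < n then X a else 0.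
Proof.
elim: n => [|n IH]; first by rewrite big_ord0.
rewrite big_ord_recr /= IH ltnS.
case: (ltngtP a n) => H.
- by rewrite mul0n addn0.
- by rewrite mul0n.
- by rewrite H mul1n.
Qed.

Lemma sum_group (s : seq (seq nat)) (g : seq nat -> nat) (j : nat) (X : nat -> nat) :
  sumn [seq (if g u <= j then X (g u) else 0) | u <- s] =
  \sum_(i < j.+1) count (fun u => g u == i) s * X i.
Proof.
elim: s => [|u s IH] /=; first by rewrite big1 // => i _; rewrite mul0n.
rewrite IH.
have -> : \sum_(i < j.+1) ((g u == i) + count (fun u => g u == i) s) * X i =
  \sum_(i < j.+1) (g u == i) * X i + \sum_(i < j.+1) count (fun u => g u == i) s * X i.
  by rewrite -big_split /=; apply: eq_bigr => i _; rewrite mulnDl.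
by rewrite sum_ind ltnS.
Qed.

Lemma D_rcons b c j : D (rcons b c) j =
  \sum_(i < j.+1) D b i * ('C(sumn b - i, j - i) * 'C(c + i, j)).
Proof.
rewrite /D words_rcons count_flatten -map_comp.
rewrite (_ : map _ _ = [seq (if des u <= j then 'C(sumn b - des u, j - des u) * 'C(c + des u, j) else 0) | u <- words b]); last first.
  apply/eq_in_map => u /words_prop [Au Su] /=.
  by rewrite (@count_des_ins (size b) u c None j) // Su.
exact: (sum_group (words b) des j (fun i => 'C(sumn b - i, j - i) * 'C(c + i, j))).
Qed.

Lemma D_nil k : D [::] k = (k == 0).
Proof. by rewrite /D /= addn0 eq_sym. Qed.

Lemma D_single c k : D [:: c] k = (k == 0).
Proof.
rewrite -[[:: c]]/(rcons [::] c) D_rcons big_ord_recl /= D_nil /= subn0.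
rewrite big1 ?addn0; last by move=> i _; rewrite D_nil.
by rewrite subn0 bin0n mul1n; case: k => [|k]; rewrite ?bin0 //= mul0n.
Qed.

Lemma D_take2 b k : 2 <= size b ->
  D (take 2 b) k = 'C(nth 0 b 0, k) * 'C(nth 0 b 1, k).
Proof.
case: b => [|b0 [|b1 b']] //= _.
rewrite take0 -[[:: b0; b1]]/(rcons [:: b0] b1) D_rcons big_ord_recl /= D_single /=.
rewrite big1 ?addn0; last by move=> i _; rewrite D_single.
by rewrite !subn0 mul1n.
Qed.

Lemma foldr_maxn z b : foldr maxn z b = maxn z (foldr maxn 0 b).
Proof.
elim: b => [|x b IH] /=; first by rewrite maxn0.
by rewrite IH maxnCA.
Qed.

Lemma pmax_le b : foldr maxn 0 b <= sumn b.
Proof. elim: b => [|x b IH] //=; rewrite geq_max leq_addr /=; lia. Qed.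

Lemma D_van b i : sumn b - foldr maxn 0 b < i -> D b i = 0.
Proof.
elim/last_ind: b i => [|b c IH] i.
  by rewrite D_nil /=; case: i.
rewrite sumn_rcons foldr_rcons foldr_maxn => Hi.
rewrite D_rcons big1 // => i' _.
have HM := pmax_le b.
case: (ltnP (sumn b - foldr maxn 0 b) i') => Hi'.
  by rewrite IH.
have [cM | Mc] := leqP c (foldr maxn 0 b).
  by rewrite (@bin_small (c + i')) ?muln0 //; lia.
rewrite (@bin_small (sumn b - i')) ?muln0 ?mul0n //; lia.
Qed.

Lemma sum_tuple_rcons m (T : finType) (F : m.+1.-tuple T -> nat) :
  \sum_(t : m.+1.-tuple T) F t =
  \sum_(t : m.-tuple T) \sum_(x : T) F [tuple of rcons t x].
Proof.
rewrite pair_big /=.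
pose h (p : m.-tuple T * T) : m.+1.-tuple T := [tuple of rcons p.1 p.2].
pose g (t : m.+1.-tuple T) : m.-tuple T * T :=
  ([tuple of belast (thead t) (behead t)], last (thead t) (behead t)).
rewrite (reindex h) /=; last first.
  apply: onW_bij; exists g.
    case=> t x; rewrite /g /h /=; congr pair.
      apply: val_inj => /=.
      by case: t => [[|y s] Hs] //=; rewrite ?belast_rcons.
    by case: t => [[|y s] Hs] //=; rewrite last_rcons.
  move=> t; apply: val_inj; rewrite /g /h /=.
  by rewrite -lastI [in RHS](tuple_eta t).
by [].
Qed.

Lemma idx_rcons m k (v : seq nat) xv s : size v = m -> 2 <= s <= m.+2 ->
  idx m.+3 k (rcons v xv) s = idx m.+2 xv v s.
Proof.
move=> Sv /andP [s2 sm]; rewrite /idx.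
have -> : (s == m.+3) = false by apply/negbTE; rewrite neq_ltn ltnS sm.
rewrite nth_rcons Sv.
case: (eqVneq s m.+2) => [->|ne].
  have -> : m.+2 - 2 = m by lia.
  by rewrite ltnn eqxx.
move/eqP: ne => ne.
have -> : s - 2 < m by lia.
by [].
Qed.

Lemma inDelta_rcons b m k (v : seq nat) xv : size v = m ->
  inDelta b m.+3 k (rcons v xv) =
  inDelta b m.+2 xv v && (xv <= minn (psum b m.+2 - pmax b m.+2) k).
Proof.
move=> Sv; rewrite /inDelta /index_iota.
have -> : m.+3 - 2 = m + 1 by lia.
have -> : m.+2 - 2 = m by lia.
rewrite iotaD all_cat /= andbT.
congr (_ && _).
  apply: eq_in_all => s; rewrite mem_iota => Hs.
  by rewrite !idx_rcons //; lia.
rewrite (@idx_rcons m k v xv (2 + m)) //; last by lia.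
have -> : 2 + m = m.+2 by lia.
by rewrite /idx !eqxx.
Qed.

Lemma big_nat_zero a c (F : nat -> nat) : (forall i, a <= i < c -> F i = 0) ->
  \sum_(a <= i < c) F i = 0.
Proof. by move=> H; rewrite big_nat_cond big1 // => i /andP [Hi _]; apply: H. Qed.

Lemma sum_trunc (M bs k : nat) (F : nat -> nat) : bs <= M ->
  (forall i, bs < i -> F i = 0) ->
  \sum_(x < M.+1) (if x <= minn bs k then F x else 0) = \sum_(i < k.+1) F i.
Proof.
move=> bM F0.
rewrite -(big_mkord xpredT (fun x => if x <= minn bs k then F x else 0)).
rewrite -(big_mkord xpredT F).
rewrite (@big_cat_nat _ _ _ (minn bs k).+1) //=; last by rewrite ltnS; apply: leq_trans (geq_minl _ _) bM.
rewrite [in RHS](@big_cat_nat _ _ _ (minn bs k).+1) //=; last by rewrite ltnS geq_minr.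
rewrite (@big_nat_zero (minn bs k).+1 M.+1); last first.
  by move=> i /andP [Hi _]; rewrite ifF //; apply/negbTE; rewrite -ltnNge.
rewrite (@big_nat_zero (minn bs k).+1 k.+1); last first.
  move=> i /andP [Hi Hi']; apply: F0; move: Hi Hi'; rewrite ltnS.
  lia.
rewrite !addn0; apply: eq_big_nat => i /andP [_ Hi].
by rewrite -ltnS Hi.
Qed.

Definition Tsum (b : seq nat) (m k : nat) : nat :=
  \sum_(t : m.-tuple 'I_(sumn b).+1 | inDelta b m.+2 k [seq val x | x <- t])
     A2 b (idx m.+2 k [seq val x | x <- t] 2) *
     \prod_(2 <= s < m.+2) Ast b (idx m.+2 k [seq val x | x <- t] s)
                              (idx m.+2 k [seq val x | x <- t] s.+1) s.

Lemma psum_le b s : psum b s <= sumn b.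
Proof. by rewrite /psum -{2}(cat_take_drop s b) sumn_cat leq_addr. Qed.

Lemma Tsum0 b k : 2 <= size b -> Tsum b 0 k = D (take 2 b) k.
Proof.
move=> Hs; rewrite D_take2 // /Tsum.
have E : forall t : 0.-tuple 'I_(sumn b).+1, [seq val x | x <- t] = [::].
  by move=> t; rewrite tuple0.
rewrite (eq_bigl xpredT); last by move=> t; rewrite E.
rewrite (eq_bigr (fun _ => A2 b k)); last first.
  by move=> t _; rewrite E big_geq // muln1.
by rewrite sum_nat_const card_tuple expn0 mul1n.
Qed.

Lemma Tsum_eq b m k : m.+2 <= size b -> Tsum b m k = D (take m.+2 b) k.
Proof.
elim: m k => [|m IH] k Hs; first exact: Tsum0.
set bs := psum b m.+2 - pmax b m.+2.
rewrite /Tsum big_mkcond sum_tuple_rcons /=.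
have E : forall (t : m.-tuple 'I_(sumn b).+1) (x : 'I_(sumn b).+1),
  (if inDelta b m.+3 k [seq val y | y <- rcons t x]
   then A2 b (idx m.+3 k [seq val y | y <- rcons t x] 2) *
     \prod_(2 <= s < m.+3) Ast b (idx m.+3 k [seq val y | y <- rcons t x] s)
                              (idx m.+3 k [seq val y | y <- rcons t x] s.+1) s
   else 0) =
  if val x <= minn bs k then
    Ast b x k m.+2 *
    (if inDelta b m.+2 x [seq val y | y <- t]
     then A2 b (idx m.+2 x [seq val y | y <- t] 2) *
       \prod_(2 <= s < m.+2) Ast b (idx m.+2 x [seq val y | y <- t] s)
                              (idx m.+2 x [seq val y | y <- t] s.+1) s
     else 0)
  else 0.
  move=> t x.
  have Sv : size [seq val y | y <- t] = m by rewrite size_map size_tuple.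
  rewrite map_rcons inDelta_rcons // andbC.
  case: (val x <= minn bs k) => //=.
  case: (inDelta _ _ _ _) => /=; last by rewrite muln0.
  rewrite big_nat_recr //= idx_rcons //.
  rewrite (@idx_rcons m k _ _ m.+2) //; last by lia.
  have -> : idx m.+2 x [seq val y | y <- t] m.+2 = x by rewrite /idx eqxx.
  have -> : idx m.+3 k (rcons [seq val y | y <- t] x) m.+3 = k by rewrite /idx eqxx.
  rewrite (eq_big_nat _ _ (F2 := fun s => Ast b (idx m.+2 x [seq val y | y <- t] s)
                              (idx m.+2 x [seq val y | y <- t] s.+1) s)); last first.
    by move=> s Hs'; rewrite !idx_rcons //; lia.
  by rewrite mulnA mulnC.
under eq_bigr do under eq_bigr do rewrite E.
rewrite exchange_big /=.
have Hs' : m.+2 <= size b by apply: ltnW.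
have F : forall x : 'I_(sumn b).+1,
  \sum_(t : m.-tuple 'I_(sumn b).+1)
        (if val x <= minn bs k
         then
          Ast b x k m.+2 *
          (if inDelta b m.+2 x [seq val y | y <- t]
           then
            A2 b (idx m.+2 x [seq val y | y <- t] 2) *
            \prod_(2 <= s < m.+2)
               Ast b (idx m.+2 x [seq val y | y <- t] s)
                 (idx m.+2 x [seq val y | y <- t] s.+1) s
           else 0)
         else 0) =
  if val x <= minn bs k then Ast b x k m.+2 * D (take m.+2 b) x else 0.
  move=> x; case: ifP => _; last by rewrite big1.
  by rewrite -big_distrr /= -big_mkcond -/(Tsum b m x) IH.
rewrite (eq_bigr _ (fun x _ => F x)).
rewrite (@sum_trunc (sumn b) bs k (fun i => Ast b i k m.+2 * D (take m.+2 b) i)); last first.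
- by move=> i Hi; rewrite D_van ?muln0.
- by apply: leq_trans (leq_subr _ _) (psum_le _ _).
rewrite [in RHS](take_nth 0) // D_rcons.
apply: eq_bigr => i _.
by rewrite mulnC.
Qed.


Lemma descents_des n (w : seq 'I_n) : descents w = des (map val w).
Proof.
rewrite /descents.
elim: w => [|x [|y w] IH] //=.
by rewrite IH.
Qed.

Lemma lift_seq n (s : seq nat) : all (fun x => x < n) s ->
  map val (pmap (insub : nat -> option 'I_n) s) = s.
Proof.
move=> As; rewrite (pmap_filter (@insubK _ _ _)).
apply/all_filterP; apply: sub_all As => x Hx /=.
by rewrite insubT.
Qed.

Lemma uniq_words b : uniq (words b).
Proof.
apply: count_mem_uniq => w.
by rewrite -has_pred1 has_count count_words; case: (valid b w).
Qed.

Lemma mem_words b w : (w \in words b) = valid b w.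
Proof. by rewrite -has_pred1 has_count count_words; case: (valid b w). Qed.

Lemma newcomb_D b k : newcomb b k = D b k.
Proof.
rewrite /newcomb /D cardE.
set A := [set _ | _].
rewrite -(size_map (fun w : (sumn b).-tuple 'I_(size b) => map val (val w))).
rewrite -size_filter; apply: perm_size; apply: uniq_perm.
- rewrite map_inj_uniq ?enum_uniq //.
  by move=> w1 w2 /inj_map H; apply: val_inj; apply: H; apply: val_inj.
- by rewrite filter_uniq ?uniq_words.
move=> s; rewrite mem_filter mem_words.
apply/mapP/idP.
- move=> [w]; rewrite mem_enum inE => /andP [/forallP Hc /eqP Hd] ->.
  rewrite -descents_des Hd eqxx /= /valid all_map.
  apply/andP; split; first by apply/allP => x _ /=; apply: ltn_ord.
  apply/allP => j; rewrite mem_iota add0n => /= Hj.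
  have := Hc (Ordinal Hj); rewrite count_map /=.
  by rewrite (eq_count (a2 := pred1 (Ordinal Hj))).
- move=> /andP [/eqP Hd Hv].
  have [As Ss] : all (fun x => x < size b) s /\ size s = sumn b.
    by apply: words_prop; rewrite mem_words.
  set p := pmap (insub : nat -> option 'I_(size b)) s.
  have Hp : map val p = s by apply: lift_seq.
  have Sp : size p == sumn b by rewrite -Ss -Hp size_map.
  exists (Tuple Sp) => //.
  rewrite mem_enum inE; apply/andP; split; last by rewrite descents_des /= Hp Hd.
  apply/forallP => j.
  move: Hv => /andP [_ /allP /(_ (val j))]; rewrite mem_iota add0n ltn_ord => /(_ isT).
  rewrite -Hp count_map /=.
  by rewrite (eq_count (a2 := pred1 j)).
Qed.

Theorem mainTheorem11 (b : seq nat) (n : nat) :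
  size b = n -> 3 <= n -> all (fun x => 0 < x) b ->
  forall k : nat, k <= sumn b - pmax b n ->
  newcomb b k =
  \sum_(t : (n - 2).-tuple 'I_(sumn b).+1 |
          inDelta b n k [seq val x | x <- t])
     A2 b (idx n k [seq val x | x <- t] 2) *
     \prod_(2 <= s < n) Ast b (idx n k [seq val x | x <- t] s)
                              (idx n k [seq val x | x <- t] s.+1) s.
Proof.
move=> Hn H3 _ k _.
case: n Hn H3 => [|[|m]] // Hn _.
have -> : m.+2 - 2 = m by lia.
rewrite -/(Tsum b m k) Tsum_eq; last by rewrite Hn.
by rewrite -Hn take_size newcomb_D.
Qed.
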